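(* Let $G$ be a connected graph with infinitely many nodes. Then the enlargement ${}^{*}G$ has either exactly one galaxy (its principal galaxy) or infinitely many galaxies.
   Context: Conventions. $G=\{X,B\}$ is a graph whose branches are two-element subsets of $X$, and $d$ is the graph distance. Fix a free ultrafilter $\mathcal F$ on $\mathbb N$. Hypernodes and enlargement. Hypernodes are classes $[x_n]$ of node sequences, with two sequences identified when they agree on a set in $\mathcal F$. A standard hypernode is the class of a constant sequence. ${}^{*}G$ consists of the hypernodes and the hyperbranches $[\{x_n,y_n\}]$ with $\{n:\{x_n,y_n\}\in B\}\in\mathcal F$. Galaxies. Hypernodes $[x_n]$ and $[y_n]$ are limitedly distant if $\{n:d(x_n,y_n)\le k\}\in\mathcal F$ for some $k\in\mathbb N$. Galaxies are the classes of this equivalence relation, together with the hyperbranches between their hypernodes. The principal galaxy contains the standard hypernodes. *)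

(* Defs.v *)
From Stdlib Require Import List.

(* A graph G = {X, B}: nodes of type X, branches given by a symmetric,
   irreflexive adjacency relation (branches are two-element subsets). *)
Definition is_graph {X : Type} (adj : X -> X -> Prop) : Prop :=
  (forall x y, adj x y -> adj y x) /\ (forall x, ~ adj x x).

(* [within adj k x y] : there is a walk of length at most k from x to y,
   i.e. the graph distance satisfies d(x,y) <= k. *)
Inductive within {X : Type} (adj : X -> X -> Prop) : nat -> X -> X -> Prop :=
| within_refl : forall k x, within adj k x x
| within_step : forall k x y z, adj x y -> within adj k y z -> within adj (S k) x z.

Definition connected {X : Type} (adj : X -> X -> Prop) : Prop :=
  forall x y : X, exists k, within adj k x y.

Definition infinite_type (X : Type) : Prop :=
  ~ exists l : list X, forall x : X, In x l.

Definition free_ultrafilter (F : (nat -> Prop) -> Prop) : Prop :=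
  F (fun _ => True) /\
  ~ F (fun _ => False) /\
  (forall A B : nat -> Prop, (forall n, A n -> B n) -> F A -> F B) /\
  (forall A B : nat -> Prop, F A -> F B -> F (fun n => A n /\ B n)) /\
  (forall A : nat -> Prop, F A \/ F (fun n => ~ A n)) /\
  (forall m : nat, F (fun n => n <> m)).

(* Hypernodes are represented by node sequences nat -> X (two sequences
   represent the same hypernode iff they agree on a set in F). *)
Definition same_hypernode {X : Type} (F : (nat -> Prop) -> Prop)
  (x y : nat -> X) : Prop := F (fun n => x n = y n).

Definition standard {X : Type} (s : X) : nat -> X := fun _ => s.

Definition lim_dist {X : Type} (adj : X -> X -> Prop)
  (F : (nat -> Prop) -> Prop) (x y : nat -> X) : Prop :=
  exists k : nat, F (fun n => within adj k (x n) (y n)).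

(* ^*G has exactly one galaxy, the principal one: every hypernode lies in
   the galaxy of the standard hypernodes. *)
Definition only_principal_galaxy {X : Type} (adj : X -> X -> Prop)
  (F : (nat -> Prop) -> Prop) : Prop :=
  forall x : nat -> X, exists s : X, lim_dist adj F x (standard s).

Definition infinitely_many_galaxies {X : Type} (adj : X -> X -> Prop)
  (F : (nat -> Prop) -> Prop) : Prop :=
  exists g : nat -> (nat -> X),
    forall i j : nat, i <> j -> ~ lim_dist adj F (g i) (g j).

(* Main.v *)
Require Import Defs.
From Stdlib Require Import Arith Lia Classical ClassicalEpsilon.

Lemma w_mono {X} (adj : X -> X -> Prop) a x y : within adj a x y -> forall b, a <= b -> within adj b x y.
Proof.
  induction 1; intros b Hb.
  - apply within_refl.
  - destruct b as [|b]; [lia|]. eapply within_step; eauto. apply IHwithin; lia.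
Qed.

Lemma w_trans {X} (adj : X -> X -> Prop) a b x y z :
  within adj a x y -> within adj b y z -> within adj (a + b) x z.
Proof.
  intros H; revert z; induction H; intros w Hw.
  - eapply w_mono; eauto; lia.
  - simpl. eapply within_step; eauto.
Qed.

Lemma w_sym {X} (adj : X -> X -> Prop) : is_graph adj ->
  forall a x y, within adj a x y -> within adj a y x.
Proof.
  intros [Hs _]. induction 1.
  - apply within_refl.
  - assert (H1 : within adj 1 y x) by (eapply within_step; [apply Hs; eauto| apply within_refl]).
    eapply w_mono. eapply w_trans; eauto. lia.
Qed.

Lemma w_split {X} (adj : X -> X -> Prop) D a b : within adj D a b ->
  forall t, t <= D -> exists y, within adj t a y /\ within adj (D - t) y b.
Proof.
  induction 1; intros t Ht.
  - exists x; split; apply within_refl.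
  - destruct t as [|t].
    + exists x; split; [apply within_refl|]. simpl. eapply within_step; eauto.
    + destruct (IHwithin t) as [y' [H1 H2]]; [lia|].
      exists y'; split; [eapply within_step; eauto|]. simpl. exact H2.
Qed.

Lemma min_exists (P : nat -> Prop) : forall k, P k -> exists D, P D /\ forall m, P m -> D <= m.
Proof.
  intro k; induction k as [k IH] using lt_wf_ind; intros Hk.
  destruct (classic (exists m, m < k /\ P m)) as [[m [Hm Pm]]|Hn].
  - eapply IH; eauto.
  - exists k; split; auto. intros m Pm. destruct (le_lt_dec k m); auto.
    exfalso; apply Hn; eauto.
Qed.

Fixpoint h (i D : nat) : nat := match i with 0 => D | S i => Nat.div2 (h i D) end.

Lemma h_S i D : h (S i) D <= h i D /\ h i D <= 2 * h (S i) D + 1 /\ 2 * h (S i) D <= h i D.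
Proof. simpl. pose proof (Nat.div2_odd (h i D)). destruct (Nat.odd (h i D)); simpl in *; lia. Qed.

Lemma h_le i D : h i D <= D.
Proof. induction i; auto. pose proof (h_S i D). lia. Qed.

Lemma h_anti i j D : i <= j -> h j D <= h i D.
Proof. induction 1; auto. pose proof (h_S m D). lia. Qed.

Lemma h_low i D : D < (h i D + 1) * 2 ^ i.
Proof.
  induction i; simpl; [lia|]. pose proof (h_S i D). simpl in H.
  assert ((h i D + 1) * 2 ^ i <= (2 * (Nat.div2 (h i D) + 1)) * 2 ^ i) by (apply Nat.mul_le_mono_r; lia).
  lia.
Qed.

Theorem mainTheorem5 (X : Type) (adj : X -> X -> Prop)
  (F : (nat -> Prop) -> Prop) :
  free_ultrafilter F ->
  is_graph adj ->
  connected adj ->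
  infinite_type X ->
  only_principal_galaxy adj F \/ infinitely_many_galaxies adj F.
Proof.
  intros [FT [F0 [Fmon [Fand [Fult Ffree]]]]] Hg Hc _.
  destruct (classic (only_principal_galaxy adj F)) as [|Hn]; [left; auto|right].
  unfold only_principal_galaxy in Hn.
  apply not_all_ex_not in Hn. destruct Hn as [x Hx].
  set (s0 := x 0).
  assert (Hfar : forall k, ~ F (fun n => within adj k (x n) s0)).
  { intros k Hk. apply Hx. exists s0, k. exact Hk. }
  assert (HD : forall n, exists D, within adj D s0 (x n) /\ forall m, within adj m s0 (x n) -> D <= m).
  { intro n. destruct (Hc s0 (x n)) as [k Hk]. apply (min_exists (fun D => within adj D s0 (x n)) k Hk). }
  set (D := fun n => proj1_sig (constructive_indefinite_description _ (HD n))).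
  assert (HDs : forall n, within adj (D n) s0 (x n) /\ forall m, within adj m s0 (x n) -> D n <= m).
  { intro n. unfold D. destruct (constructive_indefinite_description _ (HD n)); simpl; auto. }
  assert (Hy : forall i n, exists y, within adj (h i (D n)) s0 y /\ within adj (D n - h i (D n)) y (x n)).
  { intros i n. apply w_split. apply HDs. apply h_le. }
  set (g := fun i n => proj1_sig (constructive_indefinite_description _ (Hy i n))).
  assert (Hgs : forall i n, within adj (h i (D n)) s0 (g i n) /\ within adj (D n - h i (D n)) (g i n) (x n)).
  { intros i n. unfold g. destruct (constructive_indefinite_description _ (Hy i n)); simpl; auto. }
  assert (Hbig : forall k, F (fun n => k < D n)).
  { intro k. destruct (Fult (fun n => within adj k (x n) s0)) as [H|H].
    - exfalso; eapply Hfar; eauto.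
    - eapply Fmon; [|exact H]. intros n Hn. simpl in Hn.
      destruct (le_lt_dec (D n) k); auto. exfalso; apply Hn.
      apply (w_sym adj Hg). eapply w_mono; [apply HDs|]. auto. }
  assert (Key : forall i j, i < j -> ~ lim_dist adj F (g i) (g j)).
  { intros i j Hij [k Hk].
    apply F0. eapply Fmon; [|apply (Fand _ _ Hk (Hbig ((k + 1) * 2 ^ (S i))))].
    intros n [Hw Hlt]. simpl.
    destruct (Hgs i n) as [_ Hi2]. destruct (Hgs j n) as [Hj1 _].
    pose proof (w_trans _ _ _ _ _ _ Hj1 (w_sym adj Hg _ _ _ Hw)) as T1.
    pose proof (w_trans _ _ _ _ _ _ T1 Hi2) as T2.
    apply (proj2 (HDs n)) in T2.
    pose proof (h_le i (D n)). pose proof (h_anti (S i) j (D n) Hij).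
    pose proof (h_S i (D n)). pose proof (h_low (S i) (D n)).
    assert (k < h (S i) (D n)).
    { destruct (le_lt_dec (h (S i) (D n)) k); auto.
      assert ((h (S i) (D n) + 1) * 2 ^ S i <= (k + 1) * 2 ^ S i) by (apply Nat.mul_le_mono_r; lia).
      lia. }
    lia. }
  exists g. intros i j Hij Hl.
  destruct (Nat.lt_gt_cases i j) as [[H|H] _]; auto.
  - eapply Key; eauto.
  - apply (Key j i H). destruct Hl as [k Hk]. exists k.
    eapply Fmon; [|exact Hk]. intros n Hn. apply (w_sym adj Hg); auto.
Qed.
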